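(* Let $\mathcal{G}=(\mathcal{V},\mathcal{E})$ be a directed graph with $n$ nodes, $m$ edges and terminals $s,t$, let $f:2^{\mathcal{E}}\to\mathbb{R}_+$ be normalized, monotone nondecreasing and submodular with Lovász extension $\tilde f$, and let $C^*$ be an $(s,t)$-cut minimizing $f$. Let $(x^*,y^* )$ be an optimal solution of the relaxation $$\min_{y\in\mathbb{R}^{\mathcal{E}},x\in\mathbb{R}^{\mathcal{V}}}\tilde f(y)\ \text{ s.t. } -x(u)+x(v)+y(e)\ge 0\ \forall e=(u,v)\in\mathcal{E},\ x(s)-x(t)\ge1,\ y\ge0,$$ with $x^*\in[0,1]^n$, $y^*\in[0,1]^m$. For $\theta$ drawn uniformly at random from $[0,1]$, let $\mathcal{V}_\theta=\{u\in\mathcal{V}: x^*(u)\ge\theta\}$ and let $C_\theta$ be the cut consisting of the edges leaving $\mathcal{V}_\theta$. Then $\mathbb{E}_\theta[f(C_\theta)]\le (n-1)\tilde f(y^* )\le (n-1)f(C^* )$.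
   Context: An $(s,t)$-cut is a set of edges whose removal disconnects all $s$-$t$ paths. The Lovász extension: for $x\in[0,1]^m$ written uniquely as $x=\sum_j\lambda_j\chi_{B_j}$ with $\lambda_j>0$ and nested level sets $B_1\subset B_2\subset\cdots$, $\tilde f(x)=\sum_j\lambda_j f(B_j)$, where $\chi_B$ is the indicator vector of $B$. *)

(* Defs.v *)
From HB Require Import structures.
From mathcomp Require Import all_boot all_order all_algebra.
From mathcomp Require Import all_classical all_reals all_analysis.
Set Implicit Arguments. Unset Strict Implicit. Unset Printing Implicit Defensive.
Import Order.TTheory GRing.Theory Num.Theory.
Local Open Scope ring_scope.

Section Defs.
Variables (R : realType) (V E : finType) (src dst : E -> V).

Definition simple_digraph : Prop :=
  (forall e, src e != dst e) /\ injective (fun e => (src e, dst e)).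

Fixpoint walk (a b : V) (p : seq E) : bool :=
  match p with
  | [::] => a == b
  | e :: p' => (src e == a) && walk (dst e) b p'
  end.

Definition st_cut (s t : V) (C : {set E}) : Prop :=
  forall p : seq E, walk s t p -> has (fun e => e \in C) p.

Definition normalized (f : {set E} -> R) := f finset.set0 = 0.
Definition nonneg_fun (f : {set E} -> R) := forall A, 0 <= f A.
Definition monotone_set (f : {set E} -> R) :=
  forall A B : {set E}, A \subset B -> f A <= f B.
Definition submodular (f : {set E} -> R) :=
  forall A B : {set E}, f (A :|: B) + f (A :&: B) <= f A + f B.

(* Lovász extension (for y >= 0): with v_1 > ... > v_k > 0 the distinct positive
   values of y and v_{k+1} = 0, y = sum_j (v_j - v_{j+1}) chi_{B_j} with
   B_j = {e | v_j <= y e}, and the extension is sum_j (v_j - v_{j+1}) f(B_j). *)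
Definition lovasz (f : {set E} -> R) (y : E -> R) : R :=
  \sum_(v <- undup [seq y e | e <- enum E] | 0 < v)
     (v - \big[Num.max/0]_(e | y e < v) y e) * f [set e | v <= y e].

Definition relax_feasible (s t : V) (x : V -> R) (y : E -> R) : Prop :=
  (forall e, - x (src e) + x (dst e) + y e >= 0) /\
  x s - x t >= 1 /\ (forall e, 0 <= y e).

Definition relax_optimal f (s t : V) (x : V -> R) (y : E -> R) : Prop :=
  relax_feasible s t x y /\
  forall x' y', relax_feasible s t x' y' -> lovasz f y <= lovasz f y'.

Definition Vtheta (x : V -> R) (th : R) : {set V} := [set u | th <= x u].
Definition Ctheta (x : V -> R) (th : R) : {set E} :=
  [set e | (src e \in Vtheta x th) && (dst e \notin Vtheta x th)].

End Defs.

(* Main.v *)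
Require Import Defs.
From HB Require Import structures.
From mathcomp Require Import all_boot all_order all_algebra.
From mathcomp Require Import all_classical all_reals all_analysis.
From mathcomp Require Import measurable_realfun.
From mathcomp Require Import lra.
Import Order.TTheory GRing.Theory Num.Theory.
Local Open Scope ring_scope.

Section Lov.
Variables (R : realType) (E : finType).
Implicit Types (y : E -> R) (f : {set E} -> R).

Definition prevv y (v : R) : R := \big[Num.max/0]_(e | y e < v) y e.

Lemma prevv_ge0 y v : 0 <= prevv y v.
Proof. exact: bigmax_ge_id. Qed.

Lemma prevv_lt y v : 0 < v -> prevv y v < v.
Proof. by move=> v0; apply: bigmax_lt. Qed.

Lemma prevv_ub y v e : y e < v -> y e <= prevv y v.
Proof. by move=> h; apply: (le_bigmax_cond _ (P := fun e => y e < v)). Qed.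

Lemma prevv_le y v w : 0 <= w -> (forall e, y e < v -> y e <= w) -> prevv y v <= w.
Proof. by move=> w0 h; apply: bigmax_le. Qed.

Lemma prevv_att y v : 0 < prevv y v -> exists e, y e < v /\ prevv y v = y e.
Proof.
rewrite /prevv; elim/big_rec: _ => [|e z Pe IH]; first by rewrite ltxx.
have [h1|h1] := leP (y e) z; rewrite /=.
  by apply: IH.
by move=> _; exists e.
Qed.

Definition Lv y := undup [seq y e | e <- enum E].

Lemma memLv y v : (v \in Lv y) = [exists e, v == y e].
Proof.
rewrite mem_undup; apply/mapP/existsP => [[e _ ->]|[e /eqP ->]]; first by exists e.
by exists e; rewrite ?mem_enum.
Qed.

Lemma big_pred1_useq (r : seq R) (a : R) (F : R -> R) :
  uniq r -> a \in r -> \sum_(v <- r | v == a) F v = F a.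
Proof.
move=> ur ar; rewrite (big_rem _ ar) eqxx big1_seq; first by rewrite /= addr0.
by move=> v /andP[/eqP -> ]; rewrite mem_rem_uniqF.
Qed.

Lemma tele y : (forall e, 0 <= y e) -> forall e0, 0 < y e0 ->
  \sum_(v <- Lv y | (0 < v) && (v <= y e0)) (v - prevv y v) = y e0.
Proof.
move=> y0 e0.
have uL : uniq (Lv y) by rewrite undup_uniq.
move: {2}#|[set e | y e < y e0]| (leqnn #|[set e | y e < y e0]|) => k.
elim: k e0 => [|k IH] e0 hk pos;
have e0L : y e0 \in Lv y by rewrite memLv; apply/existsP; exists e0.
all: have := prevv_ge0 y (y e0); rewrite le_eqVlt => /orP[/eqP p0 | ppos].
- rewrite big_seq_cond (eq_bigl (fun v => v == y e0)).
    by rewrite big_pred1_useq // -p0 subr0.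
  move=> v /=; rewrite memLv; apply/idP/idP.
    case/andP=> /existsP[e /eqP ->] /andP[ye0 ye]; rewrite eq_le ye /=.
    rewrite leNgt; apply/negP => lt; have := @prevv_ub y _ _ lt; rewrite -p0.
    by rewrite leNgt ye0.
  move/eqP ->; rewrite pos lexx !andbT; apply/existsP; exists e0 => //.
- have [e1 [l1 _]] := @prevv_att y _ ppos.
  have : (0 < #|[set e | (y e < y e0)%R]|)%N.
    by apply/card_gt0P; exists e1; rewrite inE.
  by rewrite leqn0 in hk; rewrite (eqP hk).
- rewrite big_seq_cond (eq_bigl (fun v => v == y e0)).
    by rewrite big_pred1_useq // -p0 subr0.
  move=> v /=; rewrite memLv; apply/idP/idP.
    case/andP=> /existsP[e /eqP ->] /andP[ye0 ye]; rewrite eq_le ye /=.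
    rewrite leNgt; apply/negP => lt; have := @prevv_ub y _ _ lt; rewrite -p0.
    by rewrite leNgt ye0.
  move/eqP ->; rewrite pos lexx !andbT; apply/existsP; exists e0 => //.
- have [e1 [l1 pe]] := @prevv_att y _ ppos.
  have pos1 : 0 < y e1 by rewrite -pe.
  have hk1 : (#|[set e | (y e < y e1)%R]| <= k)%N.
    rewrite -ltnS; apply: leq_trans hk; apply: proper_card; apply/properP; split.
      by apply/fintype.subsetP => e; rewrite !inE => /lt_trans; apply.
    by exists e1; rewrite !inE ?l1 ?ltxx.
  rewrite (bigID (fun v => v == y e0)) /=.
  rewrite (eq_bigl (fun v => v == y e0)); last first.
    by move=> v; case: eqP => [->|]; rewrite ?andbT ?andbF ?pos ?lexx.
  rewrite big_pred1_useq // big_seq_cond.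
  rewrite (eq_bigl (fun v => (v \in Lv y) && ((0 < v) && (v <= y e1)))); last first.
    move=> v; rewrite memLv; apply/idP/idP.
      case/andP=> /existsP[e /eqP ->] /andP[/andP[ye0 ye] ne]; rewrite ye0 /=.
      apply/andP; split; first by apply/existsP; exists e.
      by rewrite -pe; apply: prevv_ub; rewrite lt_neqAle ne ye.
    case/andP=> ex /andP[ye ye1]; rewrite ex ye /=.
    rewrite (le_trans ye1 (ltW l1)) /= lt_eqF //.
    by apply: le_lt_trans l1.
  by rewrite -big_seq_cond IH // -pe subrK.
Qed.

Lemma lovasz_ge0 f y : nonneg_fun f -> 0 <= lovasz f y.
Proof.
move=> nn; apply: sumr_ge0 => v v0; apply: mulr_ge0 => //.
by rewrite subr_ge0; apply: ltW; apply: (@prevv_lt y).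
Qed.

Lemma lovasz_lb f y (C : {set E}) c : normalized f -> nonneg_fun f ->
  monotone_set f -> (forall e, 0 <= y e) -> 0 <= c ->
  (forall e, e \in C -> c <= y e) -> c * f C <= lovasz f y.
Proof.
move=> nf nn mf y0 c0 cC.
have [->|[ec ecC]] := set_0Vmem C.
  by rewrite nf mulr0 lovasz_ge0.
have [e0 e0C minC] : exists2 e0, e0 \in C & forall e, e \in C -> y e0 <= y e.
  case: (@extremumP R E <=%R ec (fun e => e \in C) y lexx (@le_trans _ _) le_total ecC).
  by move=> e0 ? ?; exists e0.
have := y0 e0; rewrite le_eqVlt => /orP[/eqP ye0|pos].
  have -> : c = 0 by apply/eqP; rewrite eq_le c0 andbT ye0 cC.
  by rewrite mul0r lovasz_ge0.
rewrite /lovasz (bigID (fun v => v <= y e0)) /=.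
apply: le_trans (_ : _ <= \sum_(v <- Lv y | (0 < v) && (v <= y e0))
   (v - prevv y v) * f [set e | v <= y e]) _; last first.
  rewrite lerDl; apply: sumr_ge0 => v /andP[v0 _]; apply: mulr_ge0 => //.
  by rewrite subr_ge0; apply: ltW; apply: (@prevv_lt y).
apply: le_trans (_ : _ <= \sum_(v <- Lv y | (0 < v) && (v <= y e0))
   (v - prevv y v) * f C) _; last first.
  apply: ler_sum => v /andP[v0 vle]; apply: ler_wpM2l.
    by rewrite subr_ge0; apply: ltW; apply: (@prevv_lt y).
  apply: mf; apply/fintype.subsetP => e eC; rewrite inE.
  by apply: le_trans vle (minC _ eC).
rewrite -big_distrl /= tele //; apply: ler_wpM2r => //.
exact: cC.
Qed.

Lemma lovasz_ind f (C : {set E}) : normalized f -> nonneg_fun f ->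
  lovasz f (fun e => if e \in C then 1 else 0) <= f C.
Proof.
move=> nf nn; set y := fun e => _.
rewrite /lovasz -/(Lv y) big_seq_cond.
rewrite (eq_bigl (fun v => (v \in Lv y) && (v == 1))); last first.
  move=> v; case vL: (v \in Lv y) => //=.
  move: vL; rewrite memLv => /existsP[e /eqP ->]; rewrite /y.
  by case: (e \in C); rewrite ?ltr01 ?eqxx ?ltxx // eq_sym oner_eq0.
rewrite -big_seq_cond.
case: (boolP (1 \in Lv y)) => h; last first.
  by rewrite big1_seq // => v /andP[/eqP -> ]; rewrite (negbTE h).
rewrite big_pred1_useq ?undup_uniq //.
have P0 : prevv y 1 = 0.
  apply/eqP; rewrite eq_le prevv_ge0 andbT; apply: prevv_le => // e.
  by rewrite /y; case: (e \in C); rewrite ?ltxx.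
rewrite /prevv in P0; rewrite P0.
have -> : [set e | 1 <= y e] = C.
  by apply/setP => e; rewrite inE /y; case: (e \in C); rewrite ?lexx ?ler10.
by rewrite subr0 mul1r.
Qed.
End Lov.

Section Int.
Variable R : realType.
Local Open Scope ereal_scope.

Lemma int_mono (D : set R) (g h : R -> \bar R) :
  (forall x, D x -> 0 <= g x) -> (forall x, D x -> g x <= h x) ->
  \int[@lebesgue_measure R]_(x in D) g x <= \int[@lebesgue_measure R]_(x in D) h x.
Proof.
move=> g0 gh; rewrite !ge0_integralE //; last first.
  by move=> x Dx; apply: le_trans (g0 _ Dx) (gh _ Dx).
apply: ereal_sup_le => _ [k kg <-]; exists k => //= x.
apply: le_trans (kg x) _; exact: lee_restrict.
Qed.

Lemma term_int (D : set R) (mD : measurable D) (a b k : R) : (0 <= k)%R -> (b <= a)%R ->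
  \int[@lebesgue_measure R]_(x in D) (k * \1_(`]b, a]%classic) x)%:E <= (k * (a - b))%:E.
Proof.
move=> k0 ba.
have mI : measurable (`]b, a]%classic : set R) by [].
under eq_integral do rewrite EFinM.
rewrite ge0_integralZl //; last first.
  by apply/measurable_EFinP; apply: measurable_indic.
rewrite integral_indic // EFinM; apply: lee_wpmul2l; first by rewrite lee_fin.
have := @le_measure _ _ _ (@lebesgue_measure R) (`]b, a] `&` D)%classic `]b, a]%classic.
move=> /(_ _ _ (@subIsetl _ _ _)) H; apply: le_trans (H _ _) _.
- by rewrite inE; apply: measurableI.
- by rewrite inE.
move: (lebesgue_measure_itv `]b, a]) => /= E1.
rewrite [X in X <= _](_ : _ = lebesgue_measure (`]b,a]%classic : set R)) //.
rewrite E1; case: ifP => // _.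
by rewrite lee_fin subr_ge0.
Qed.
End Int.

Section Graph.
Variables (R : realType) (V E : finType) (src dst : E -> V).

Lemma walk_rcons a b p e : walk src dst a b p -> src e = b ->
  walk src dst a (dst e) (rcons p e).
Proof.
elim: p a => [|e' p IH] a /=; first by move=> /eqP -> ->; rewrite !eqxx.
by case/andP=> -> h se; rewrite IH.
Qed.

Lemma part2 (s t : V) (f : {set E} -> R) (Cstar : {set E}) (xs : V -> R) (ys : E -> R) :
  normalized f -> nonneg_fun f -> st_cut src dst s t Cstar ->
  relax_optimal src dst f s t xs ys -> lovasz f ys <= f Cstar.
Proof.
move=> nf nn cut [_ opt].
pose reach u := `[< exists p, walk src dst s u p && all (fun e => e \notin Cstar) p >].
pose x' u : R := if reach u then 1 else 0.
pose y' e : R := if e \in Cstar then 1 else 0.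
have h2 := @lovasz_ind _ _ f Cstar nf nn.
suff h1 : relax_feasible src dst s t x' y'.
  exact: le_trans (opt _ _ h1) h2.
have rs : reach s by apply/asboolP; exists [::]; rewrite /= eqxx.
have rt : reach t = false.
  apply/negbTE/negP => /asboolP [p /andP[w a]].
  have := cut p w; move/hasP=> [e eP eC]; by move/allP: a => /(_ e eP); rewrite eC.
split; [|split].
- move=> e; rewrite /y' /x'; case eC: (e \in Cstar).
    by case: (reach _); case: (reach _); lra.
  case hs: (reach (src e)); last by case: (reach _); lra.
  have -> : reach (dst e).
    move/asboolP: hs => [p /andP[w a]]; apply/asboolP; exists (rcons p e).
    rewrite all_rcons eC a /= andbT; apply: walk_rcons; first exact: w.
    by [].
  lra.
- by rewrite /x' rs rt; lra.
- by move=> e; rewrite /y'; case: (e \in Cstar).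
Qed.
End Graph.

Theorem lemma10 (R : realType) (V E : finType) (src dst : E -> V) (s t : V)
  (f : {set E} -> R) (Cstar : {set E}) (xs : V -> R) (ys : E -> R) :
  simple_digraph src dst -> s != t ->
  normalized f -> nonneg_fun f -> monotone_set f -> submodular f ->
  st_cut src dst s t Cstar ->
  (forall C, st_cut src dst s t C -> f Cstar <= f C) ->
  relax_optimal src dst f s t xs ys ->
  (forall u, 0 <= xs u <= 1) -> (forall e, 0 <= ys e <= 1) ->
  (\int[@lebesgue_measure R]_(th in `[0%R, 1%R]%classic)
      (f (Ctheta src dst xs th))%:E
     <= ((#|V|.-1)%:R * lovasz f ys)%:E)%E /\
  (#|V|.-1)%:R * lovasz f ys <= (#|V|.-1)%:R * f Cstar.
Proof.
move=> _ _ nf nn mf _ cut _ ropt hx hy.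
split; last first.
  by apply: ler_wpM2l => //; apply: part2 ropt.
have [[feas [hst y0]] _] := ropt.
have x0 u : 0 <= xs u by case/andP: (hx u).
have x1 u : xs u <= 1 by case/andP: (hx u).
have xt : xs t = 0.
  by have := x0 t; have := x1 s; lra.
pose b u := prevv _ _ xs (xs u).
pose K u := f (Ctheta src dst xs (xs u)).
have K0 u : 0 <= K u by apply: nn.
have bx u : b u <= xs u.
  by apply: prevv_le => // w /ltW.
have b0 u : 0 <= b u by apply: prevv_ge0.
have pw th : f (Ctheta src dst xs th) <=
    \sum_(u : V) K u * \1_(`]b u, xs u]%classic) th.
  have sum0 : 0 <= \sum_(u : V) K u * \1_(`]b u, xs u]%classic) th.
    by apply: sumr_ge0 => u _; apply: mulr_ge0 => //; rewrite indicE ler0n.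
  have [C0|[e eC]] := set_0Vmem (Ctheta src dst xs th).
    by rewrite C0 nf.
  rewrite /Ctheta /Vtheta !inE in eC; case/andP: eC => hs hd.
  rewrite -ltNge in hd.
  have thpos : 0 < th by apply: le_lt_trans (x0 _) hd.
  have [u thu minu] : exists2 u, th <= xs u & forall w, th <= xs w -> xs u <= xs w.
    case: (@extremumP R V <=%R (src e) (fun w => th <= xs w) xs lexx (@le_trans _ _) le_total hs).
    by move=> u ? ?; exists u.
  have VE : Vtheta xs th = Vtheta xs (xs u).
    apply/setP => w; rewrite !inE; apply/idP/idP; first exact: minu.
    exact: le_trans.
  have bth : b u < th.
    apply: bigmax_lt => // w wu; rewrite ltNge; apply/negP => /minu.
    by rewrite leNgt wu.
  have ind1 : \1_(`]b u, xs u]%classic) th = 1 :> R.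
    by rewrite indicE mem_set //= in_itv /= bth thu.
  have -> : Ctheta src dst xs th = Ctheta src dst xs (xs u) by rewrite /Ctheta VE.
  rewrite (bigD1 u) //= ind1 mulr1.
  rewrite lerDl; apply: sumr_ge0 => w _; apply: mulr_ge0 => //; rewrite indicE ler0n.
have tb u : K u * (xs u - b u) <= lovasz f ys.
  rewrite mulrC; apply: lovasz_lb => //; first by rewrite subr_ge0.
  move=> e; rewrite /Ctheta /Vtheta !inE => /andP[h1 h2].
  rewrite -ltNge in h2.
  have := @prevv_ub _ _ xs (xs u) _ h2; rewrite -/(b u) => h3.
  have := feas e; lra.
have sb : \sum_(u : V) K u * (xs u - b u) <= (#|V|.-1)%:R * lovasz f ys.
  have bt : b t = 0.
    apply/eqP; rewrite eq_le b0 andbT; apply: prevv_le => // w.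
    by rewrite xt => /ltW.
  rewrite (bigD1 t) //= bt xt subrr mulr0 add0r.
  apply: le_trans (ler_sum _ (fun u _ => tb u)) _.
  rewrite (eq_bigl (fun i => i \in predC1 t)) // sumr_const cardC1 mulr_natl.
  by [].
have mD : measurable (`[0%R, 1%R]%classic : set R) by [].
have H := @int_mono R (`[0%R, 1%R]%classic) (fun th => (f (Ctheta src dst xs th))%:E)
   (fun th => (\sum_(u : V) K u * \1_(`]b u, xs u]%classic) th)%:E).
have H1 : (forall x : R, `[0, 1]%classic x ->
  (0%R <= (f (Ctheta src dst xs x))%:E)%E) by move=> th _; rewrite lee_fin.
have H2 : forall x : R, `[0, 1]%classic x ->
  ((f (Ctheta src dst xs x))%:E <= (\sum_u K u * \1_(`]b u, xs u]%classic) x)%:E)%E.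
  by move=> th _; rewrite lee_fin.
have H3 := H H1 H2.
apply: (le_trans H3).
under eq_integral do rewrite -sumEFin.
rewrite ge0_integral_sum //; last first.
  move=> u th _; rewrite lee_fin; apply: mulr_ge0 => //; rewrite indicE ler0n.
  move=> u; apply/measurable_EFinP; apply: measurable_funM.
    exact: measurable_cst.
  exact: measurable_indic.
apply: le_trans (lee_sum _ (fun u _ => @term_int R _ mD (xs u) (b u) (K u) (K0 u) (bx u))) _.
by rewrite sumEFin lee_fin.
Qed.
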